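(* In the setting of the context, fix a feasible basis and distinct integers $r,s$ with $0\le r,s\le d$. The following are equivalent: (i) in $\Delta$, vertex $r$ is adjacent to vertex $s$ and to no other vertex; (ii) $a^*_r\ne\theta^*_0$ and $$u_i(\theta_s)=u_i(\theta_r)\,\frac{\theta^*_i-a^*_r}{\theta^*_0-a^*_r}\qquad(0\le i\le d).$$
   Context: Let $\mathbb F$ be a field, $d\ge1$, $V$ an $\mathbb F$-vector space of dimension $d+1$, $\mathcal A=\mathrm{End}(V)$ with identity $I$. Let $E^*_0,\dots,E^*_d\in\mathcal A$ satisfy $E^*_iE^*_j=\delta_{i,j}E^*_i$, $\mathrm{rank}(E^*_i)=1$. Let $A\in\mathcal A$ satisfy $E^*_iAE^*_j=0$ if $|i-j|>1$ and $\neq0$ if $|i-j|=1$. Assume $A$ has $d+1$ distinct eigenvalues $\theta_0,\dots,\theta_d\in\mathbb F$ with primitive idempotents $E_i=\prod_{j\ne i}\frac{A-\theta_jI}{\theta_i-\theta_j}$. Let $\theta^*_i\in\mathbb F$, $A^*=\sum_i\theta^*_iE^*_i$, $a^*_i=\mathrm{tr}(E_iA^* )$. Let $\Delta$ be the graph on $\{0,\dots,d\}$ with $i\sim j$ iff $i\ne j$ and $E_iA^*E_j\ne0$. A basis $v_0,\dots,v_d$ of $V$ is feasible if $v_i\in E^*_iV$ for all $i$; then $Av_i=b_{i-1}v_{i-1}+a_iv_i+c_{i+1}v_{i+1}$ ($v_{-1}=v_{d+1}=0$), with $a_i=\mathrm{tr}(E^*_iA)$, nonzero $b_0,\dots,b_{d-1}$,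 $c_1,\dots,c_d$, and $b_d=c_0=0$. Define $u_0,\dots,u_{d+1}\in\mathbb F[\lambda]$ by $u_{-1}=0$, $u_0=1$, $\lambda u_i=c_iu_{i-1}+a_iu_i+b_iu_{i+1}$ $(0\le i\le d-1)$, $\lambda u_d=c_du_{d-1}+a_du_d+u_{d+1}/(b_0\cdots b_{d-1})$. *)

(* Defs.v *)
(* End(V) is modelled as 'M[F]_(d.+1) acting on column
   vectors 'cV[F]_(d.+1) (V = F^(d+1)); all index families are nat-indexed,
   only indices 0..d being relevant. *)
From HB Require Import structures.
From mathcomp Require Import all_boot all_order all_algebra.
Set Implicit Arguments. Unset Strict Implicit. Unset Printing Implicit Defensive.
Import Order.TTheory GRing.Theory Num.Theory.
Local Open Scope ring_scope.

Section Defs.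
Variables (F : fieldType) (d : nat).

Definition primidem (A : 'M[F]_(d.+1)) (theta : nat -> F) (i : nat) : 'M[F]_(d.+1) :=
  \prod_(j < d.+1 | (j : nat) != i) ((theta i - theta j)^-1 *: (A - (theta j)%:M)).

Definition Astar (Es : nat -> 'M[F]_(d.+1)) (thetas : nat -> F) : 'M[F]_(d.+1) :=
  \sum_(i < d.+1) thetas i *: Es i.

Definition astar (A : 'M[F]_(d.+1)) (theta : nat -> F)
    (Es : nat -> 'M[F]_(d.+1)) (thetas : nat -> F) (i : nat) : F :=
  \tr (primidem A theta i *m Astar Es thetas).

Definition acoef (Es : nat -> 'M[F]_(d.+1)) (A : 'M[F]_(d.+1)) (i : nat) : F :=
  \tr (Es i *m A).

Definition Delta_adj (A : 'M[F]_(d.+1)) (theta : nat -> F)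
    (Es : nat -> 'M[F]_(d.+1)) (thetas : nat -> F) (i j : nat) : Prop :=
  i <> j /\ primidem A theta i *m Astar Es thetas *m primidem A theta j != 0.

End Defs.

(* upair a b c n = (u_{n-1}, u_n), from u_{-1} = 0, u_0 = 1 and
   lambda u_i = c_i u_{i-1} + a_i u_i + b_i u_{i+1}, i.e.
   u_{i+1} = b_i^{-1} ((lambda - a_i) u_i - c_i u_{i-1})  (0 <= i <= d-1). *)
Fixpoint upair (F : fieldType) (a b c : nat -> F) (n : nat) : {poly F} * {poly F} :=
  match n with
  | 0 => (0, 1)
  | k.+1 => let: (p, q) := upair a b c k in
            (q, (b k)^-1 *: (('X - (a k)%:P) * q - c k *: p))
  end.

Definition upoly (F : fieldType) (a b c : nat -> F) (n : nat) : {poly F} :=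
  (upair a b c n).2.

(* Main.v *)
Require Import Defs.
From HB Require Import structures.
From mathcomp Require Import all_boot all_order all_algebra.
From mathcomp Require Import ring.
Set Implicit Arguments. Unset Strict Implicit. Unset Printing Implicit Defensive.
Import Order.TTheory GRing.Theory Num.Theory.
Local Open Scope ring_scope.

Lemma sum3 (V : zmodType) (d : nat) (S F G H : nat -> V) :
  (forall i, (i <= d)%N -> S i = (if i is i'.+1 then F i' else 0) + G i + (if (i < d)%N then H i else 0)) ->
  \sum_(i < d.+1) S i = \sum_(i < d) F i + \sum_(i < d.+1) G i + \sum_(i < d) H i.
Proof.
move=> hS; under eq_bigr => i _ do rewrite (hS i (ltn_ord i)).
rewrite !big_split /=; congr (_ + _ + _).
  by rewrite big_ord_recl /= add0r; apply: eq_bigr => i _.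
by rewrite big_ord_recr /= ltnn addr0; apply: eq_bigr => i _; rewrite /= ltn_ord.
Qed.

Definition Mt (F : fieldType) (d : nat) (f : nat -> 'cV[F]_d.+1) : 'M[F]_d.+1 :=
  \matrix_(i < d.+1, k < d.+1) f i k 0.

Lemma Mt_comb (F : fieldType) (d : nat) (f : nat -> 'cV[F]_d.+1) (u : 'rV[F]_d.+1) :
  (u *m Mt f)^T = \sum_(i < d.+1) u 0 i *: f i.
Proof.
apply/matrixP => k j; rewrite !mxE summxE; apply: eq_bigr => i _.
by rewrite !mxE (ord1 j).
Qed.

Lemma row_Mt (F : fieldType) (d : nat) (f : nat -> 'cV[F]_d.+1) (i : 'I_d.+1) :
  row i (Mt f) = (f i)^T.
Proof. by apply/matrixP => k j; rewrite !mxE (ord1 k). Qed.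

Lemma comb_inj (F : fieldType) (d : nat) (f : nat -> 'cV[F]_d.+1) (y : nat -> F) :
  Mt f \in unitmx -> \sum_(i < d.+1) y i *: f i = 0 -> forall i, (i <= d)%N -> y i = 0.
Proof.
move=> hU hs i hi.
pose u : 'rV[F]_d.+1 := \row_j y j.
have : u *m Mt f = 0.
  apply: trmx_inj; rewrite Mt_comb trmx0 -{}[RHS]hs; apply: eq_bigr => j _; by rewrite mxE.
move/(congr1 (mulmx^~ (invmx (Mt f)))); rewrite mulmxK // mul0mx => /matrixP/(_ 0 (inord i)).
by rewrite !mxE inordK.
Qed.

Lemma comb_surj (F : fieldType) (d : nat) (f : nat -> 'cV[F]_d.+1) (z : 'cV[F]_d.+1) :
  Mt f \in unitmx -> exists y : nat -> F, z = \sum_(i < d.+1) y i *: f i.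
Proof.
move=> hU; have -> : z = (z^T *m invmx (Mt f) *m Mt f)^T by rewrite mulmxKV ?trmxK.
set u := z^T *m invmx (Mt f).
exists (fun i => u 0 (inord i)); rewrite Mt_comb; apply: eq_bigr => i _.
by rewrite inord_val.
Qed.

Lemma unit_of_ker (F : fieldType) (n : nat) (M : 'M[F]_n) :
  (forall u : 'rV[F]_n, u *m M = 0 -> u = 0) -> M \in unitmx.
Proof.
move=> h; rewrite -row_free_unit -kermx_eq0; apply/eqP/row_matrixP => i.
by rewrite row0; apply: h; rewrite -row_mul mulmx_ker row0.
Qed.

Lemma ker_of_nonunit (F : fieldType) (n : nat) (M : 'M[F]_n) :
  M \notin unitmx -> exists2 z : 'cV[F]_n, M *m z = 0 & z != 0.
Proof.
rewrite -unitmx_tr -row_free_unit -kermx_eq0 => hk.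
have [i hi] : exists i, row i (kermx M^T) != 0.
  apply/existsP; apply: contraR hk; rewrite negb_exists => /forallP h.
  by apply/eqP/row_matrixP => i; rewrite row0; apply/eqP; rewrite -[_ == _]negbK h.
exists (row i (kermx M^T))^T; last by rewrite trmx_eq0.
rewrite -[M in M *m _]trmxK -trmx_mul. by rewrite -row_mul mulmx_ker row0 trmx0.
Qed.

Definition Tf (F : fieldType) (d : nat) (a b c : nat -> F) (y : nat -> F) (j : nat) : F :=
  (if j is j'.+1 then c j * y j' else 0) + a j * y j + (if (j < d)%N then b j * y j.+1 else 0).

Lemma AVec (F : fieldType) (d : nat) (A : 'M[F]_d.+1) (v : nat -> 'cV[F]_d.+1) (a b c : nat -> F)
 (hAv : forall i, (i <= d)%N ->
     A *m v i = (if i is i'.+1 then b i' *: v i' else 0)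
                + a i *: v i
                + (if (i < d)%N then c i.+1 *: v i.+1 else 0)) (y : nat -> F) :
 A *m (\sum_(i < d.+1) y i *: v i) = \sum_(i < d.+1) Tf d a b c y i *: v i.
Proof.
rewrite mulmx_sumr (@sum3 _ d (fun i => A *m (y i *: v i)) (fun i => (y i.+1 * b i) *: v i)
   (fun i => (y i * a i) *: v i) (fun i => (y i * c i.+1) *: v i.+1)); last first.
  move=> i hi; rewrite -scalemxAr hAv //.
  by case: i hi => [|i] hi /=; case: ifP => _; rewrite !(scalerDr, scalerA, scaler0, addr0, add0r).
rewrite (@sum3 _ d (fun i => Tf d a b c y i *: v i) (fun i => (c i.+1 * y i) *: v i.+1)
   (fun i => (a i * y i) *: v i) (fun i => (b i * y i.+1) *: v i)); last first.
  move=> i hi; rewrite /Tf.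
  by case: i hi => [|i] hi /=; case: ifP => _; rewrite !(scalerDl, scale0r, addr0, add0r).
have e1 : \sum_(i < d) (y i.+1 * b i) *: v i = \sum_(i < d) (b i * y i.+1) *: v i.
  by apply: eq_bigr => i _; rewrite mulrC.
have e2 : \sum_(i < d.+1) (y i * a i) *: v i = \sum_(i < d.+1) (a i * y i) *: v i.
  by apply: eq_bigr => i _; rewrite mulrC.
have e3 : \sum_(i < d) (y i * c i.+1) *: v i.+1 = \sum_(i < d) (c i.+1 * y i) *: v i.+1.
  by apply: eq_bigr => i _; rewrite mulrC.
rewrite e1 e2 e3.
set X := \sum_(i < d) _ *: v i; set Y := \sum_(i < d.+1) _; set Z := \sum_(i < d) _ *: v i.+1.
by rewrite addrC [X + Y]addrC addrA.
Qed.

Lemma rec_uniq (F : fieldType) (d : nat) (a b c : nat -> F)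
  (hb : forall i, (i < d)%N -> b i != 0) (y : nat -> F) (th : F) :
  (forall j, (j < d)%N -> Tf d a b c y j = th * y j) ->
  forall i, (i <= d)%N -> y i = y 0%N * (upoly a b c i).[th].
Proof.
move=> hT.
suff H : forall i, (i <= d)%N -> y i = y 0%N * (upair a b c i).2.[th] /\
   (if i is i'.+1 then y i' else 0) = y 0%N * (upair a b c i).1.[th].
  by move=> i hi; case: (H i hi).
elim=> [|i IH] hi /=.
  by rewrite !hornerE.
have hi' : (i <= d)%N := ltnW hi.
case: (IH hi') => e1 e2; move: e1 e2; case: (upair a b c i) => p q /= e1 e2.
split; last by [].
have := hT i hi; rewrite /Tf hi.
have -> : (if i is i'.+1 then c i * y i' else 0) = c i * (if i is i'.+1 then y i' else 0).
  by case: (i) => [|?]; rewrite ?mulr0.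
rewrite e1 e2 => E.
have hbi := hb i hi.
have -> : y i.+1 = (th * (y 0%N * q.[th]) - c i * (y 0%N * p.[th]) - a i * (y 0%N * q.[th])) / b i.
  by rewrite -E; field.
rewrite hornerZ hornerD hornerN hornerM hornerZ hornerXsubC; field.
by [].
Qed.

Lemma AsVec (F : fieldType) (d : nat) (Es : nat -> 'M[F]_d.+1) (thetas : nat -> F)
  (v : nat -> 'cV[F]_d.+1)
  (hEidem : forall i j, (i <= d)%N -> (j <= d)%N ->
              Es i *m Es j = if i == j then Es i else 0)
  (hvfeas : forall i, (i <= d)%N -> exists w : 'cV[F]_(d.+1), v i = Es i *m w)
  (y : nat -> F) :
  Astar Es thetas *m (\sum_(i < d.+1) y i *: v i) = \sum_(i < d.+1) (thetas i * y i) *: v i.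
Proof.
have hv : forall i : 'I_d.+1, Astar Es thetas *m v i = thetas i *: v i.
  move=> i; have [w ->] := hvfeas i (ltn_ord i).
  rewrite /Astar mulmx_suml (bigD1 i) //= big1 ?addr0 => [|j hj].
    by rewrite -scalemxAl mulmxA hEidem ?eqxx // -(ltnS _ d) ltn_ord.
  rewrite -scalemxAl mulmxA hEidem -?(ltnS _ d) ?ltn_ord //.
  by rewrite ifN ?mul0mx ?scaler0.
rewrite mulmx_sumr; apply: eq_bigr => i _.
by rewrite -scalemxAr hv scalerA mulrC.
Qed.

Lemma primidem_eig (F : fieldType) (d : nat) (A : 'M[F]_d.+1) (theta : nat -> F) (j : nat)
  (z : 'cV[F]_d.+1) (lam : F) :
  A *m z = lam *: z ->
  primidem A theta j *m z =
  (\prod_(l < d.+1 | (l : nat) != j) ((theta j - theta l)^-1 * (lam - theta l))) *: z.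
Proof.
move=> hz; rewrite /primidem.
apply: (big_rec2 (fun (X : 'M[F]_d.+1) (cf : F) => X *m z = cf *: z)).
  by rewrite mul1mx scale1r.
move=> l X cf _ IH.
rewrite -mulmxE -mulmxA IH -scalemxAr -scalemxAl mulmxBl hz mul_scalar_mx.
by rewrite -scalerBl !scalerA; congr (_ *: _); ring.
Qed.

Lemma primidem_on (F : fieldType) (d : nat) (A : 'M[F]_d.+1) (theta : nat -> F)
  (htheta_inj : forall i j, (i <= d)%N -> (j <= d)%N -> theta i = theta j -> i = j)
  (j k : nat) (z : 'cV[F]_d.+1) :
  (j <= d)%N -> (k <= d)%N -> A *m z = theta k *: z ->
  primidem A theta j *m z = if k == j then z else 0.
Proof.
move=> hj hk hz; rewrite (primidem_eig _ _ hz).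
case: eqP => [->|hkj].
  rewrite big1 ?scale1r // => l hl; rewrite mulVf // subr_eq0.
  apply/eqP => /htheta_inj; move: hl => /eqP hl.
  by move=> h; apply: hl; apply/esym/h => //; rewrite -(ltnS _ d) ltn_ord.
rewrite (bigD1 (inord k)) /=; last by rewrite inordK //; apply/eqP.
by rewrite inordK // subrr mulr0 mul0r scale0r.
Qed.

Fixpoint kseq (F : fieldType) (b c : nat -> F) (i : nat) : F :=
  if i is i'.+1 then kseq b c i' * b i' / c i else 1.

Definition beta (F : fieldType) (d : nat) (k x y : nat -> F) : F :=
  \sum_(i < d.+1) k i * x i * y i.

Lemma beta_T (F : fieldType) (d : nat) (a b c : nat -> F)
  (hc : forall i, (1 <= i <= d)%N -> c i != 0) (x y : nat -> F) :
  beta d (kseq b c) x (Tf d a b c y) = beta d (kseq b c) (Tf d a b c x) y.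
Proof.
set k := kseq b c.
rewrite /beta (@sum3 _ d (fun i => k i * x i * Tf d a b c y i)
   (fun i => k i.+1 * x i.+1 * c i.+1 * y i) (fun i => k i * x i * a i * y i)
   (fun i => k i * x i * b i * y i.+1)); last first.
  move=> i hi; rewrite /Tf.
  by case: i hi => [|i] hi /=; case: ifP => _; ring.
rewrite (@sum3 _ d (fun i => k i * Tf d a b c x i * y i)
   (fun i => k i.+1 * c i.+1 * x i * y i.+1) (fun i => k i * a i * x i * y i)
   (fun i => k i * b i * x i.+1 * y i)); last first.
  move=> i hi; rewrite /Tf.
  by case: i hi => [|i] hi /=; case: ifP => _; ring.
have kS : forall i : 'I_d, k i.+1 * c i.+1 = k i * b i.
  move=> i; rewrite /k /= -/k; have := hc i.+1; rewrite ltn_ord => /(_ isT) h.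
  by field.
have e1 : \sum_(i < d) k i.+1 * x i.+1 * c i.+1 * y i = \sum_(i < d) k i * b i * x i.+1 * y i.
  by apply: eq_bigr => i _; rewrite -kS; ring.
have e2 : \sum_(i < d.+1) k i * x i * a i * y i = \sum_(i < d.+1) k i * a i * x i * y i.
  by apply: eq_bigr => i _; ring.
have e3 : \sum_(i < d) k i * x i * b i * y i.+1 = \sum_(i < d) k i.+1 * c i.+1 * x i * y i.+1.
  by apply: eq_bigr => i _; rewrite kS; ring.
rewrite e1 e2 e3; ring.
Qed.

Lemma Tf_scale (F : fieldType) (d : nat) (a b c x y : nat -> F) (c0 : F) :
  (forall i, (i <= d)%N -> y i = c0 * x i) ->
  forall j, (j <= d)%N -> Tf d a b c y j = c0 * Tf d a b c x j.
Proof.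
move=> h j hj; rewrite /Tf (h j hj).
case: j hj => [|j] hj /=.
  by case: ifP => h0; [rewrite (h 1%N h0) | ]; ring.
rewrite (h j (ltnW hj)).
by case: ifP => h0; [rewrite (h j.+2 h0) | ]; ring.
Qed.

Unset Implicit Arguments. Set Strict Implicit. Set Printing Implicit Defensive.

Theorem proposition7p14 (F : fieldType) (d : nat) (hd : (1 <= d)%N)
  (Es : nat -> 'M[F]_(d.+1)) (A : 'M[F]_(d.+1))
  (theta thetas : nat -> F)
  (v : nat -> 'cV[F]_(d.+1)) (b c : nat -> F)
  (* Estar_i Estar_j = delta_ij Estar_i, rank Estar_i = 1 *)
  (hEidem : forall i j, (i <= d)%N -> (j <= d)%N ->
              Es i *m Es j = if i == j then Es i else 0)
  (hErank : forall i, (i <= d)%N -> \rank (Es i) = 1%N)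
  (* tridiagonality of A with respect to the Estar_i *)
  (hAzero : forall i j, (i <= d)%N -> (j <= d)%N -> (1 < `|i - j|)%N ->
              Es i *m A *m Es j = 0)
  (hAnz : forall i j, (i <= d)%N -> (j <= d)%N -> `|i - j|%N = 1%N ->
              Es i *m A *m Es j != 0)
  (* A has d+1 distinct eigenvalues theta_0..theta_d in F *)
  (htheta_eig : forall i, (i <= d)%N -> eigenvalue A (theta i))
  (htheta_inj : forall i j, (i <= d)%N -> (j <= d)%N -> theta i = theta j -> i = j)
  (* v_0..v_d is a feasible basis *)
  (hvbasis : (\matrix_(k < d.+1, i < d.+1) v i k ord0) \in unitmx)
  (hvfeas : forall i, (i <= d)%N -> exists w : 'cV[F]_(d.+1), v i = Es i *m w)
  (* A v_i = b_{i-1} v_{i-1} + a_i v_i + c_{i+1} v_{i+1}, v_{-1} = v_{d+1} = 0 *)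
  (hAv : forall i, (i <= d)%N ->
     A *m v i = (if i is i'.+1 then b i' *: v i' else 0)
                + acoef Es A i *: v i
                + (if (i < d)%N then c i.+1 *: v i.+1 else 0))
  (hb : forall i, (i < d)%N -> b i != 0)
  (hc : forall i, (1 <= i <= d)%N -> c i != 0)
  (r s : nat) (hr : (r <= d)%N) (hs : (s <= d)%N) (hrs : r <> s) :
  (forall j, (j <= d)%N -> (Delta_adj A theta Es thetas r j <-> j = s)) <->
  (astar A theta Es thetas r != thetas 0%N /\
   forall i, (i <= d)%N ->
     (upoly (acoef Es A) b c i).[theta s] =
     (upoly (acoef Es A) b c i).[theta r] *
       ((thetas i - astar A theta Es thetas r) / (thetas 0%N - astar A theta Es thetas r))).
Proof.
pose a := acoef Es A.
pose k := kseq b c.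
pose Vec := fun y : nat -> F => \sum_(i < d.+1) y i *: v i.
pose X := fun (m i : nat) => (upoly a b c i).[theta m].
pose Ds := fun (y : nat -> F) (i : nat) => thetas i * y i.
pose bt := beta d k.
have hPu : Mt v \in unitmx.
  have -> : Mt v = (\matrix_(k < d.+1, i < d.+1) v i k ord0)^T.
    by apply/matrixP => i j; rewrite !mxE.
  by rewrite unitmx_tr.
have Vinj : forall y, Vec y = 0 -> forall i, (i <= d)%N -> y i = 0.
  by move=> y; apply: comb_inj.
have Vsurj : forall z, exists y, z = Vec y.
  by move=> z; apply: comb_surj.
have Vext : forall y y', (forall i, (i <= d)%N -> y i = y' i) -> Vec y = Vec y'.
  by move=> y y' h; apply: eq_bigr => i _; rewrite h // -(ltnS _ d) ltn_ord.
have VecB : forall y y', Vec (fun i => y i - y' i) = Vec y - Vec y'.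
  by move=> y y'; rewrite /Vec -sumrB; apply: eq_bigr => i _; rewrite scalerBl.
have VecZ : forall (c0 : F) y, Vec (fun i => c0 * y i) = c0 *: Vec y.
  by move=> c0 y; rewrite /Vec scaler_sumr; apply: eq_bigr => i _; rewrite scalerA.
have AV : forall y, A *m Vec y = Vec (Tf d a b c y) by move=> y; apply: AVec.
have AsV : forall y, Astar Es thetas *m Vec y = Vec (Ds y) by move=> y; apply: AsVec.
have X0 : forall m, X m 0%N = 1 by move=> m; rewrite /X /upoly /= hornerC.
have Xeig : forall m, (m <= d)%N -> forall j, (j <= d)%N -> Tf d a b c (X m) j = theta m * X m j.
  move=> m hm.
  have := htheta_eig m hm; rewrite /eigenvalue /eigenspace kermx_eq0 row_free_unit.
  case/ker_of_nonunit => z hz znz.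
  have hAz : A *m z = theta m *: z.
    by apply/eqP; rewrite -subr_eq0 -mul_scalar_mx -mulmxBl hz.
  have [y zy] := Vsurj z.
  have hT : forall j, (j <= d)%N -> Tf d a b c y j = theta m * y j.
    move=> j hj; apply/eqP; rewrite -subr_eq0; apply/eqP; move: j hj; apply: Vinj.
    by rewrite VecB VecZ -AV -zy hAz subrr.
  have hy := rec_uniq hb (fun j hj => hT j (ltnW hj)).
  have y0 : y 0%N != 0.
    apply: contraNneq znz => y00; rewrite zy (Vext _ (fun _ => 0)).
      by rewrite /Vec big1 // => i _; rewrite scale0r.
    by move=> i hi; rewrite hy // y00 mul0r.
  move=> j hj; apply: (mulfI y0).
  by rewrite -(@Tf_scale _ d a b c (X m) y (y 0%N) hy) // hT // hy // mulrCA.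
have ordle : forall i : 'I_d.+1, (i <= d)%N := fun i => ltn_ord i.
pose w := fun m => Vec (X m).
have Aw : forall m, (m <= d)%N -> A *m w m = theta m *: w m.
  by move=> m hm; rewrite /w AV -VecZ; apply: Vext => i hi; exact: Xeig.
have wnz : forall m, (m <= d)%N -> w m != 0.
  move=> m hm; apply/negP => /eqP/Vinj/(_ 0%N isT); rewrite X0; apply/eqP; exact: oner_neq0.
have Ew : forall j m, (j <= d)%N -> (m <= d)%N ->
    primidem A theta j *m w m = if m == j then w m else 0.
  by move=> j m hj hm; exact: (primidem_on htheta_inj hj hm (Aw m hm)).
have hWu : Mt w \in unitmx.
  apply: unit_of_ker => u hu.
  have hsum : \sum_(i < d.+1) u 0 i *: w i = 0 by rewrite -Mt_comb hu trmx0.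
  apply/matrixP => i0 j; rewrite (ord1 i0) mxE.
  have := congr1 (mulmx (primidem A theta j)) hsum.
  rewrite mulmx_sumr mulmx0 (bigD1 j) //= big1 => [|i hij]; last first.
    by rewrite -scalemxAr Ew ?ifN ?scaler0.
  rewrite -scalemxAr Ew ?eqxx // addr0 => /eqP.
  by rewrite scaler_eq0 (negbTE (wnz _ (ordle j))) orbF => /eqP.
have coord : forall y, exists al : nat -> F, Vec y = \sum_(m < d.+1) al m *: w m /\
    (forall i, (i <= d)%N -> y i = \sum_(m < d.+1) al m * X m i).
  move=> y; have [al hal] := comb_surj (Vec y) hWu; exists al; split => //.
  move=> i hi; apply/eqP; rewrite -subr_eq0; apply/eqP; move: i hi; apply: Vinj.
  rewrite VecB hal; apply/eqP; rewrite subr_eq0; apply/eqP.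
  rewrite /w /Vec; under eq_bigr do rewrite scaler_sumr.
  rewrite exchange_big; apply: eq_bigr => i _; rewrite scaler_suml; apply: eq_bigr => m _.
  by rewrite scalerA.
have btext : forall x y y', (forall i, (i <= d)%N -> y i = y' i) -> bt x y = bt x y'.
  by move=> x y y' h; apply: eq_bigr => i _; rewrite h.
have btlin : forall x (al : nat -> F),
    bt x (fun i => \sum_(m < d.+1) al m * X m i) = \sum_(m < d.+1) al m * bt x (X m).
  move=> x al; rewrite /bt /beta; under eq_bigr do rewrite mulr_sumr.
  rewrite exchange_big; apply: eq_bigr => m _; rewrite mulr_sumr; apply: eq_bigr => i _; ring.
have orth : forall j m, (j <= d)%N -> (m <= d)%N -> j != m -> bt (X j) (X m) = 0.
  move=> j m hj hm hjm.
  have e1 : bt (X j) (Tf d a b c (X m)) = theta m * bt (X j) (X m).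
    rewrite (btext _ _ (fun i => theta m * X m i)) => [|i hi]; last exact: Xeig.
    by rewrite /bt /beta mulr_sumr; apply: eq_bigr => i _; ring.
  have e2 : bt (Tf d a b c (X j)) (X m) = theta j * bt (X j) (X m).
    by rewrite /bt /beta mulr_sumr; apply: eq_bigr => i _; rewrite Xeig //; ring.
  have := @beta_T _ d a b c hc (X j) (X m); rewrite -/k -/bt e1 e2 => /eqP.
  rewrite -subr_eq0 -mulrBl mulf_eq0 subr_eq0 => /orP [/eqP h | /eqP //].
  by move: hjm; rewrite (htheta_inj _ _ hm hj h) eqxx.
have bnz : forall m, (m <= d)%N -> bt (X m) (X m) != 0.
  move=> m hm; pose e0 := fun i : nat => (i == 0%N)%:R : F.
  have h1 : bt (X m) e0 = 1.
    rewrite /bt /beta big_ord_recl big1 => [|i _]; last by rewrite /e0 /= mulr0.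
    by rewrite /= X0 /e0 /= addr0 !mulr1.
  have [al [_ hal]] := coord e0.
  move: h1; rewrite (btext _ _ _ hal) btlin (bigD1 (inord m)) //= big1 => [|i hi]; last first.
    rewrite orth ?mulr0 //; apply: contra hi => /eqP hmi; apply/eqP/val_inj.
    by rewrite /= inordK.
  rewrite inordK // addr0 => h1; apply/negP => /eqP h0; move: h1.
  by rewrite h0 mulr0 => /eqP; rewrite eq_sym oner_eq0.
have neqi : forall (i : 'I_d.+1) m, (m <= d)%N -> i != inord m -> (i : nat) != m.
  move=> i m hm hi; apply: contra hi => /eqP hmi; apply/eqP/val_inj.
  by rewrite /= inordK.
pose br := bt (X r) (X r).
have EVec : forall y, primidem A theta r *m Vec y = (bt (X r) y / br) *: w r.
  move=> y; have [al [hV hy]] := coord y.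
  have -> : bt (X r) y = al r * br.
    rewrite (btext _ _ _ hy) btlin (bigD1 (inord r)) //= big1 => [|i hi].
      by rewrite inordK // addr0.
    by rewrite orth ?mulr0 // eq_sym neqi.
  rewrite mulfK ?bnz // hV mulmx_sumr (bigD1 (inord r)) //= big1 => [|i hi].
    by rewrite -scalemxAr Ew ?inordK // eqxx addr0.
  by rewrite -scalemxAr Ew // ifN ?scaler0 // neqi.
pose B := fun j => bt (X r) (Ds (X j)).
have MW : forall j m, (j <= d)%N -> (m <= d)%N ->
    primidem A theta r *m Astar Es thetas *m primidem A theta j *m w m =
    if m == j then (B j / br) *: w r else 0.
  move=> j m hj hm; rewrite -mulmxA Ew //; case: eqP => [->|_]; last by rewrite mulmx0.
  by rewrite -mulmxA /w AsV EVec.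
have adj : forall j, (j <= d)%N ->
    (primidem A theta r *m Astar Es thetas *m primidem A theta j != 0) = (B j != 0).
  move=> j hj; apply/idP/idP; last first.
    move=> hB; apply/negP => /eqP hM; move: (MW j j hj hj); rewrite hM mul0mx eqxx => /esym/eqP.
    by rewrite scaler_eq0 (negbTE (wnz r hr)) orbF mulf_eq0 invr_eq0 (negbTE hB) (negbTE (bnz r hr)).
  apply: contraNneq => hB; set M := _ *m _ *m _.
  have hMW : Mt w *m M^T = 0.
    apply/row_matrixP => m; rewrite row_mul row_Mt row0 -trmx_mul MW // hB.
    by case: eqP => _; rewrite ?mul0r ?scale0r trmx0.
  by rewrite -[M]trmxK -[M^T](mulKmx hWu) hMW mulmx0 trmx0.
have htr : astar A theta Es thetas r = B r / br.
  rewrite /astar; set M := primidem A theta r *m Astar Es thetas.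
  set Q := (Mt w)^T; have hQ : Q \in unitmx by rewrite unitmx_tr.
  have MQ : M *m Q = w r *m (\row_(m < d.+1) (B m / br)).
    apply/matrixP => i m; rewrite !mxE big_ord1 !mxE.
    have hm : M *m w m = (B m / br) *: w r by rewrite /M -mulmxA /w AsV EVec.
    have := congr1 (fun N : 'cV[F]_d.+1 => N i 0) hm; rewrite !mxE mulrC => <-.
    by apply: eq_bigr => t _; rewrite !mxE.
  have Qr : invmx Q *m w r = delta_mx (inord r) 0.
    have <- : Q *m delta_mx (inord r) 0 = w r.
      by rewrite -colE; apply/matrixP => i j; rewrite !mxE (ord1 j) inordK.
    by rewrite mulKmx.
  rewrite -[M]mulmx1 -(mulmxV hQ) mulmxA MQ -mulmxA mxtrace_mulC -mulmxA Qr -colE.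
  by rewrite /mxtrace big_ord1 !mxE inordK.
have Bsym : forall j m, bt (X m) (Ds (X j)) = bt (X j) (Ds (X m)).
  by move=> j m; apply: eq_bigr => i _; rewrite /Ds; ring.
have hsr : s != r by apply/eqP => h; apply: hrs; rewrite h.
have adjB : forall j, (j <= d)%N -> Delta_adj A theta Es thetas r j <-> (r <> j /\ B j != 0).
  by move=> j hj; rewrite /Delta_adj adj.
rewrite htr; split.
- move=> H.
  have hBs : B s != 0 by have [_ ] := (adjB s hs).1 ((H s hs).2 erefl).
  have hB0 : forall j, (j <= d)%N -> j != r -> j != s -> B j = 0.
    move=> j hj hjr hjs; apply/eqP; case: (eqVneq (B j) 0) => // hB.
    have hrj : r <> j by move=> h; move: hjr; rewrite h eqxx.
    have hjs' := (H j hj).1 ((adjB j hj).2 (conj hrj hB)).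
    by move: hjs; rewrite hjs' eqxx.
  have [al [_ hal]] := coord (Ds (X r)).
  have halm : forall m, (m <= d)%N -> al m = B m / bt (X m) (X m).
    move=> m hm; have : bt (X m) (Ds (X r)) = al m * bt (X m) (X m).
      rewrite (btext _ _ _ hal) btlin (bigD1 (inord m)) //= big1 => [|i hi].
        by rewrite inordK // addr0.
      by rewrite orth ?mulr0 // eq_sym neqi.
    by rewrite (Bsym r m) => h; rewrite /B h mulfK ?bnz.
  have hexp : forall i, (i <= d)%N -> thetas i * X r i = al r * X r i + al s * X s i.
    move=> i hi; have := hal i hi; rewrite /Ds => ->.
    rewrite (bigD1 (inord r)) //= (bigD1 (inord s)) /=; last first.
      apply/eqP => /(congr1 val); rewrite /= !inordK // => /eqP.
      by rewrite (negbTE hsr).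
    rewrite big1 ?addr0 ?inordK // => m /andP [hmr hms].
    by rewrite halm // hB0 ?mul0r // neqi.
  have hals : al s != 0 by rewrite halm // mulf_neq0 ?invr_eq0 ?bnz.
  have e0 := hexp 0%N (leq0n d); rewrite !X0 !mulr1 in e0.
  have har : al r = B r / br by rewrite halm.
  have hdiff : thetas 0%N - B r / br = al s by rewrite e0 -har; ring.
  split.
    by apply: contra hals => /eqP h; rewrite -hdiff h subrr.
  move=> i hi; change (X s i = X r i * ((thetas i - B r / br) / (thetas 0%N - B r / br))).
  rewrite hdiff -har; have E := hexp i hi.
  have -> : X s i = (thetas i * X r i - al r * X r i) / al s by rewrite E; field.
  by field.
- case=> hne h2.
  set a0 := B r / br; set c0 := thetas 0%N - a0.
  have hc0 : c0 != 0 by rewrite subr_eq0 eq_sym.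
  have h3 : forall i, (i <= d)%N -> Ds (X r) i = a0 * X r i + c0 * X s i.
    by move=> i hi; have := h2 i hi; rewrite -/a -/a0 -/c0 => E; rewrite /Ds /X E; field.
  have hB : forall j, (j <= d)%N -> B j = a0 * bt (X j) (X r) + c0 * bt (X j) (X s).
    move=> j hj; rewrite /B (Bsym j r) (btext _ _ _ h3) /bt /beta !mulr_sumr -big_split.
    by apply: eq_bigr => i _ /=; ring.
  move=> j hj; rewrite adjB //; split.
    case=> hrj hBj; case: (eqVneq j s) => // hjs.
    have hjr : j != r by apply/eqP => h; apply: hrj; rewrite h.
    by move: hBj; rewrite hB // (orth j r) // (orth j s) // !mulr0 addr0 eqxx.
  move=> ->; split; first by move=> h; apply: hrs.
  by rewrite hB // (orth s r) // mulr0 add0r mulf_neq0 // bnz.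
Qed.
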